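(* Let $P$ be an instance of $k$-means clustering with $z$ outliers, $\delta\in(0,1)$, and let $S$ be a finite nonempty multiset of points of $P$ such that $|S\cap C^*_j|\ge(1-\delta)\frac{|C^*_j|}{n}|S|$ for every $1\le j\le k$. Let $S_{opt}=S\cap P_{opt}$. Then for any finite set $H\subset\mathbb{R}^D$, $Cost(\tilde P_{opt},H)\le\frac{1}{1-\delta}\frac{n}{|S|}Cost(\tilde S_{opt},H)$.
   Context: $P\subset\mathbb{R}^D$, $|P|=n$, $0<z<n$. $dist(p,H)=\min_{q\in H}\|p-q\|$; $Cost(X,Y)=\sum_{q\in X}dist(q,Y)^2$ (with multiplicity). $P_{opt}\subset P$ with $|P_{opt}|=n-z$ is the set of inliers of an optimal solution of $k$-means with $z$ outliers, $C^*_1,\dots,C^*_k$ the optimal clusters forming $P_{opt}$, $o^*_j$ the mean of $C^*_j$. Star shaped transformation: for $p\in C^*_j$, $\tilde p=o^*_j$; for $U\subseteq P_{opt}$ (multiset), $\tilde U=\{\tilde p:p\in U\}$ as a multiset. *)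

(* Defs.v *)
From HB Require Import structures.
From mathcomp Require Import all_boot all_order all_algebra.
From mathcomp Require Import reals.
Set Implicit Arguments. Unset Strict Implicit. Unset Printing Implicit Defensive.
Import Order.TTheory GRing.Theory Num.Theory.
Local Open Scope ring_scope.

Section Defs.
Variables (R : realType) (D : nat).

Definition edist (p q : 'rV[R]_D) : R :=
  Num.sqrt (\sum_(i < D) (p 0 i - q 0 i) ^+ 2).

Definition dist (p : 'rV[R]_D) (H : seq 'rV[R]_D) : R :=
  \big[Num.min/edist p (head p H)]_(q <- H) edist p q.

(* Cost(X,Y) = sum_{q in X} dist(q,Y)^2, X a multiset (list, with multiplicity) *)
Definition Cost (X Y : seq 'rV[R]_D) : R :=
  \sum_(x <- X) dist x Y ^+ 2.

Definition pts (n : nat) (p : 'I_n -> 'rV[R]_D) (A : {set 'I_n}) : seq 'rV[R]_D :=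
  [seq p i | i in A].

Definition centers (k : nat) (Y : 'I_k -> 'rV[R]_D) : seq 'rV[R]_D :=
  [seq Y j | j : 'I_k].

(* (Popt, c, X) is an optimal solution of k-means with z outliers on the
   point set {p i | i < n}: Popt is the set of inliers (n - z of them), X the
   k centers, c i the index of a nearest center of the inlier p i (so the
   optimal clusters are C*_j = {i in Popt | c i = j}), and the cost of the
   inliers w.r.t. X is minimal among all choices of z outliers and k centers. *)
Definition opt_kmeans_outliers (n k z : nat) (p : 'I_n -> 'rV[R]_D)
  (Popt : {set 'I_n}) (c : 'I_n -> 'I_k) (X : 'I_k -> 'rV[R]_D) : Prop :=
  [/\ #|Popt| = (n - z)%N,
      (forall i, i \in Popt -> forall j, edist (p i) (X (c i)) <= edist (p i) (X j)) &
      (forall (Z : {set 'I_n}) (Y : 'I_k -> 'rV[R]_D), #|Z| = z ->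
         Cost (pts p Popt) (centers X) <= Cost (pts p (~: Z)) (centers Y))].

Definition clus (n k : nat) (Popt : {set 'I_n}) (c : 'I_n -> 'I_k) (j : 'I_k)
  : {set 'I_n} := [set i in Popt | c i == j].

Definition mean (n : nat) (p : 'I_n -> 'rV[R]_D) (A : {set 'I_n}) : 'rV[R]_D :=
  (#|A|%:R)^-1 *: \sum_(i in A) p i.

Definition star (n k : nat) (p : 'I_n -> 'rV[R]_D) (Popt : {set 'I_n})
  (c : 'I_n -> 'I_k) (U : seq 'I_n) : seq 'rV[R]_D :=
  [seq mean p (clus Popt c (c i)) | i <- U].

End Defs.

(* Main.v *)
Require Import Defs.
From HB Require Import structures.
From mathcomp Require Import all_boot all_order all_algebra.
From mathcomp Require Import reals.
From mathcomp Require Import ring lra.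
Import Order.TTheory GRing.Theory Num.Theory.
Local Open Scope ring_scope.

Lemma sum_part (R : realType) (n k : nat) (c : 'I_n -> 'I_k) (F : 'I_k -> R)
  (U : seq 'I_n) :
  \sum_(i <- U) F (c i) = \sum_j (count (fun i => c i == j) U)%:R * F j.
Proof.
elim: U => [|x U IH].
  by rewrite big_nil big1 // => j _; rewrite mul0r.
rewrite big_cons IH /=.
under [in RHS]eq_bigr => j _ do rewrite natrD mulrDl.
rewrite big_split /=; congr (_ + _).
rewrite (bigD1 (c x)) //= eqxx mul1r big1 ?addr0 // => j /negbTE.
by rewrite eq_sym => ->; rewrite mul0r.
Qed.

Theorem lemma7 (R : realType) (D n k z : nat) (p : 'I_n -> 'rV[R]_D)
  (Popt : {set 'I_n}) (c : 'I_n -> 'I_k) (X : 'I_k -> 'rV[R]_D)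
  (delta : R) (S : seq 'I_n) (H : seq 'rV[R]_D) :
  injective p -> (0 < k)%N -> (0 < z)%N -> (z < n)%N ->
  opt_kmeans_outliers z p Popt c X ->
  0 < delta < 1 ->
  (0 < size S)%N ->
  (forall j : 'I_k,
     (1 - delta) * (#|clus Popt c j|%:R / n%:R) * (size S)%:R
       <= (count (fun i => i \in clus Popt c j) S)%:R) ->
  H != [::] ->
  Cost (star p Popt c (enum Popt)) H
    <= (1 - delta)^-1 * (n%:R / (size S)%:R)
       * Cost (star p Popt c [seq i <- S | i \in Popt]) H.
Proof.
move=> _ _ z0 zn _ /andP[d0 d1] S0 hS _.
set f := fun j => dist (mean p (clus Popt c j)) H ^+ 2.
have cost_eq U : Cost (star p Popt c U) H = \sum_(i <- U) f (c i).
  by rewrite /Cost /star big_map.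
rewrite !cost_eq !sum_part mulr_sumr; apply: ler_sum => j _.
have -> : count (fun i => c i == j) (enum Popt) = #|clus Popt c j|.
  rewrite -sum1_count big_enum_cond -sum1_card; apply: eq_bigl => i.
  by rewrite /clus inE.
have -> : count (fun i => c i == j) [seq i <- S | i \in Popt]
          = count (fun i => i \in clus Popt c j) S.
  rewrite count_filter; apply: eq_count => i /=.
  by rewrite /clus inE andbC.
rewrite [leRHS]mulrA; apply: ler_wpM2r; first exact: sqr_ge0.
have n0 : (0 < n%:R :> R) by rewrite ltr0n; apply: leq_trans zn.
have s0 : (0 < (size S)%:R :> R) by rewrite ltr0n.
have dd : 0 < 1 - delta by rewrite subr_gt0.
have := hS j.
set a := #|clus Popt c j|%:R; set b := (count _ S)%:R => h.
have -> : a = (1 - delta)^-1 * n%:R / (size S)%:R * ((1 - delta) * (a / n%:R) * (size S)%:R).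
  by field; rewrite !gt_eqF.
rewrite mulrA; apply: ler_wpM2l => //.
by rewrite !mulr_ge0 // ?invr_ge0 ?ltW.
Qed.
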